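(* On each of the two charts of $\mathbb OP^{(1,1)}$, with coordinates $(u,v)\in\mathbb O^2$ satisfying $1+|u|^2-|v|^2>0$, the symmetric bilinear form whose quadratic form on tangent vectors $(du,dv)=(\xi,\eta)$ is $$ds^2=\frac{|\xi|^2(1-|v|^2)-|\eta|^2(1+|u|^2)+2\mathrm{Re}\big[(u\bar v)(\eta\bar\xi)\big]}{(1+|u|^2-|v|^2)^2}$$ defines a non-degenerate metric on $\mathbb OP^{(1,1)}$ of signature $(8,8)$.
   Context: Octonions $\mathbb O=\mathbb H\oplus\mathbb H$ with product $(q_1,q_2)(p_1,p_2)=(q_1p_1-\bar p_2q_2,\ p_2q_1+q_2\bar p_1)$, conjugation $\overline{(q_1,q_2)}=(\bar q_1,-q_2)$, $\langle a,b\rangle=\mathrm{Re}(a\bar b)$, $|a|^2=\langle a,a\rangle$ (positive definite). Let $U_1=\{(1,u,v)\in\mathbb O^3:1+|u|^2-|v|^2>0\}$, $U_2=\{(u,1,v)\in\mathbb O^3:|u|^2+1-|v|^2>0\}$, and on $U_1\cup U_2$ let $[a,b,c]\sim[d,e,f]$ iff $(a,b,c)=(d\lambda,e\lambda,f\lambda)$ for some $\lambda\in\mathbb O\setminus\{0\}$. The indefinite octonionic projective plane is $\mathbb OP^{(1,1)}=(U_1\cup U_2)/_\sim$, with charts $[1,u,v]\mapsto(u,v)$ and $[u,1,v]\mapsto(u,v)$. *)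

(* Defs.v *)
From HB Require Import structures.
From mathcomp Require Import all_boot all_order all_algebra.
From mathcomp Require Import all_classical all_reals all_analysis.
Set Implicit Arguments. Unset Strict Implicit. Unset Printing Implicit Defensive.
Import Order.TTheory GRing.Theory Num.Theory.
Local Open Scope ring_scope.

Section Octonions.
Variable R : realType.

Record quat := Quat { qr : R; qi : R; qj : R; qk : R }.

Definition qadd (a b : quat) : quat :=
  Quat (qr a + qr b) (qi a + qi b) (qj a + qj b) (qk a + qk b).
Definition qopp (a : quat) : quat := Quat (- qr a) (- qi a) (- qj a) (- qk a).
Definition qscale (c : R) (a : quat) : quat :=
  Quat (c * qr a) (c * qi a) (c * qj a) (c * qk a).
Definition qmul (a b : quat) : quat :=
  Quat (qr a * qr b - qi a * qi b - qj a * qj b - qk a * qk b)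
       (qr a * qi b + qi a * qr b + qj a * qk b - qk a * qj b)
       (qr a * qj b - qi a * qk b + qj a * qr b + qk a * qi b)
       (qr a * qk b + qi a * qj b - qj a * qi b + qk a * qr b).
Definition qconj (a : quat) : quat := Quat (qr a) (- qi a) (- qj a) (- qk a).

(** Octonions O = H (+) H (Cayley-Dickson), as in the paper:
    (q1,q2)(p1,p2) = (q1 p1 - conj(p2) q2, p2 q1 + q2 conj(p1)),
    conj(q1,q2) = (conj q1, - q2). *)
Record oct := Oct { ofst : quat; osnd : quat }.

Definition oadd (x y : oct) : oct := Oct (qadd (ofst x) (ofst y)) (qadd (osnd x) (osnd y)).
Definition oscale (c : R) (x : oct) : oct := Oct (qscale c (ofst x)) (qscale c (osnd x)).
Definition omul (x y : oct) : oct :=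
  Oct (qadd (qmul (ofst x) (ofst y)) (qopp (qmul (qconj (osnd y)) (osnd x))))
      (qadd (qmul (osnd y) (ofst x)) (qmul (osnd x) (qconj (ofst y)))).
Definition oconj (x : oct) : oct := Oct (qconj (ofst x)) (qopp (osnd x)).
Definition ozero : oct := Oct (Quat 0 0 0 0) (Quat 0 0 0 0).
Definition oone : oct := Oct (Quat 1 0 0 0) (Quat 0 0 0 0).

Definition ore (x : oct) : R := qr (ofst x).
Definition oinner (a b : oct) : R := ore (omul a (oconj b)).
Definition onorm2 (a : oct) : R := oinner a a.

Definition ocoord (x : oct) (k : 'I_8) : R :=
  nth 0 [:: qr (ofst x); qi (ofst x); qj (ofst x); qk (ofst x);
            qr (osnd x); qi (osnd x); qj (osnd x); qk (osnd x)] k.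
Definition oct_of_fun (f : nat -> R) : oct :=
  Oct (Quat (f 0%N) (f 1%N) (f 2%N) (f 3%N)) (Quat (f 4%N) (f 5%N) (f 6%N) (f 7%N)).

(** Chart coordinates (u,v) in O^2 and tangent vectors (xi,eta) in O^2. *)
Definition tadd (x y : oct * oct) : oct * oct := (oadd x.1 y.1, oadd x.2 y.2).
Definition tscale (c : R) (x : oct * oct) : oct * oct := (oscale c x.1, oscale c x.2).
Definition tzero : oct * oct := (ozero, ozero).
Definition tan_of_row (w : 'rV[R]_16) : oct * oct :=
  (oct_of_fun (fun k => w 0 (inord k)), oct_of_fun (fun k => w 0 (inord (8 + k)))).

(** Domain of a chart: 1 + |u|^2 - |v|^2 > 0 (the same condition,
    |u|^2 + 1 - |v|^2 > 0, for the second chart). *)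
Definition chart_dom (p : oct * oct) : Prop := 0 < 1 + onorm2 p.1 - onorm2 p.2.

Definition ds2 (p : oct * oct) (t : oct * oct) : R :=
  let u := p.1 in let v := p.2 in let xi := t.1 in let eta := t.2 in
  (onorm2 xi * (1 - onorm2 v) - onorm2 eta * (1 + onorm2 u)
     + 2 * ore (omul (omul u (oconj v)) (omul eta (oconj xi))))
  / (1 + onorm2 u - onorm2 v) ^+ 2.

Definition dsB (p : oct * oct) (x y : oct * oct) : R :=
  (ds2 p (tadd x y) - ds2 p x - ds2 p y) / 2.

Definition gram (p : oct * oct) : 'M[R]_16 :=
  \matrix_(i, j) dsB p (tan_of_row (row i 1%:M)) (tan_of_row (row j 1%:M)).

(** Points of the two charts: [1,u,v] and [u,1,v] in O^3, and the relation
    [a,b,c] ~ [d,e,f] iff (a,b,c) = (d l, e l, f l) for some l <> 0. *)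
Definition oequiv (a b c d e f : oct) : Prop :=
  exists l : oct, l <> ozero /\ a = omul d l /\ b = omul e l /\ c = omul f l.

Definition curve_deriv0 (gamma : R -> oct * oct) (dg : oct * oct) : Prop :=
  forall k : 'I_8,
    is_derive (0 : R) (1 : R) (fun t => ocoord (gamma t).1 k) (ocoord dg.1 k) /\
    is_derive (0 : R) (1 : R) (fun t => ocoord (gamma t).2 k) (ocoord dg.2 k).

End Octonions.

(** Sylvester: a (symmetric) matrix G of size p+q has signature (p,q) iff
    it is congruent to diag(1,...,1,-1,...,-1) (p plus signs, q minus signs). *)
Definition has_signature (R : realType) (p q : nat) (G : 'M[R]_(p + q)) : Prop :=
  exists P : 'M[R]_(p + q),
    P \in unitmx /\ P^T *m G *m P = block_mx 1%:M 0 0 (- 1%:M).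
Arguments has_signature {R} p q G.

(* Main.v *)
Require Import Defs.
From HB Require Import structures.
From mathcomp Require Import all_boot all_order all_algebra.
From mathcomp Require Import all_classical all_reals all_analysis.
From mathcomp Require Import ring lra zify.
Import Order.TTheory GRing.Theory Num.Theory.
Import numFieldNormedType.Exports.
Local Open Scope ring_scope.

Section Alg.
Context {R : realType}.
Local Notation oct := (oct R).
Ltac unf := cbv beta iota delta [onorm2 oinner ore omul oconj oadd oscale qadd qmul qopp qconj qscale qr qi qj qk ofst osnd oone ozero].
Ltac dst x := case: x => [[? ? ? ?] [? ? ? ?]].
Ltac oeq := unf; congr (Oct (Quat _ _ _ _) (Quat _ _ _ _)); ring.

Lemma n2_mul (u v : oct) : onorm2 (omul u v) = onorm2 u * onorm2 v.
Proof. dst u; dst v; unf; ring. Qed.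
Lemma n2_conj (u : oct) : onorm2 (oconj u) = onorm2 u.
Proof. dst u; unf; ring. Qed.
Lemma n2_scale c (u : oct) : onorm2 (oscale c u) = c ^+ 2 * onorm2 u.
Proof. dst u; unf; ring. Qed.
Lemma mul1o (u : oct) : omul (oone R) u = u.
Proof. dst u; oeq. Qed.
Lemma mulKo (x y : oct) : omul (omul x y) (oconj y) = oscale (onorm2 y) x.
Proof. dst x; dst y; oeq. Qed.
Lemma scaleKo c (x : oct) : c != 0 -> oscale c^-1 (oscale c x) = x.
Proof. move=> c0; dst x; unf; congr (Oct (Quat _ _ _ _) (Quat _ _ _ _)); by rewrite mulrA mulVf ?mul1r. Qed.
Lemma L_u (u v : oct) : omul (oconj u) (oconj (omul v (oconj u))) = oscale (onorm2 u) (oconj v).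
Proof. dst u; dst v; oeq. Qed.
Lemma cross_scale s (x y w z : oct) :
  ore (omul (omul (oscale s x) (oconj (oscale s y))) (omul (oscale s w) (oconj (oscale s z))))
  = s ^+ 4 * ore (omul (omul x (oconj y)) (omul w (oconj z))).
Proof. dst x; dst y; dst w; dst z; unf; ring. Qed.
Lemma ore_scale c (x y : oct) : ore (omul (oscale c x) y) = c * ore (omul x y).
Proof. dst x; dst y; unf; ring. Qed.
Lemma L_b (eta u v z : oct) :
  onorm2 (oadd (omul eta (oconj u)) (omul v z)) =
  onorm2 eta * onorm2 u + onorm2 v * onorm2 z + 2 * oinner (omul eta (oconj u)) (omul v z).
Proof. dst eta; dst u; dst v; dst z; unf; ring. Qed.
Lemma L_c (eta u v z : oct) :
  ore (omul (oconj v) (omul (oadd (omul eta (oconj u)) (omul v z)) (oconj z))) =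
  oinner (omul eta (oconj u)) (omul v z) + onorm2 v * onorm2 z.
Proof. dst eta; dst u; dst v; dst z; unf; ring. Qed.
Lemma L_d (eta u v xi : oct) (l : R) :
  oinner (omul eta (oconj u)) (omul v (oadd (oconj xi) (oscale (- l) (oconj u)))) =
  2 * oinner u xi * oinner eta v - ore (omul (omul u (oconj v)) (omul eta (oconj xi)))
  - l * onorm2 u * oinner eta v.
Proof. dst eta; dst u; dst v; dst xi; unf; ring. Qed.
Lemma L_a (xi u : oct) (l : R) :
  onorm2 (oadd (oconj xi) (oscale (- l) (oconj u))) =
  onorm2 xi - 2 * l * oinner u xi + l ^+ 2 * onorm2 u.
Proof. dst xi; dst u; unf; ring. Qed.

Definition nB (al be : R) (a : oct) (x y : oct * oct) : R :=
  al * oinner x.1 y.1 - be * oinner x.2 y.2 + ore (omul a (omul x.2 (oconj y.1)))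
  + ore (omul a (omul y.2 (oconj x.1))).
Definition alp (p : oct * oct) := 1 - onorm2 p.2.
Definition bet (p : oct * oct) := 1 + onorm2 p.1.
Definition aa (p : oct * oct) := omul p.1 (oconj p.2).
Definition Dn (p : oct * oct) := 1 + onorm2 p.1 - onorm2 p.2.

Lemma ds2_nB p t : ds2 p t = nB (alp p) (bet p) (aa p) t t / (Dn p) ^+ 2.
Proof.
rewrite /ds2 /Dn; congr (_ / _); rewrite /nB /alp /bet /aa.
move: (omul p.1 (oconj p.2)) (onorm2 p.1) (onorm2 p.2) => a nu nv.
case: t => xi eta /=; dst xi; dst eta; dst a; unf; ring.
Qed.

Lemma nB_polar al be a x y :
  nB al be a (tadd x y) (tadd x y) - nB al be a x x - nB al be a y y = 2 * nB al be a x y.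
Proof. case: x => x1 x2; case: y => y1 y2; rewrite /nB /tadd /=; dst x1; dst x2; dst y1; dst y2; dst a; unf; ring. Qed.
Lemma nB_sym al be a x y : nB al be a x y = nB al be a y x.
Proof. case: x => x1 x2; case: y => y1 y2; rewrite /nB /=; dst x1; dst x2; dst y1; dst y2; dst a; unf; ring. Qed.
Lemma nB_lin al be a c x y z :
  nB al be a (tadd (tscale c x) y) z = c * nB al be a x z + nB al be a y z.
Proof. case: x => x1 x2; case: y => y1 y2; case: z => z1 z2; rewrite /nB /tadd /tscale /=; dst x1; dst x2; dst y1; dst y2; dst z1; dst z2; dst a; unf; ring. Qed.

Lemma dsB_nB p x y : dsB p x y = nB (alp p) (bet p) (aa p) x y / (Dn p) ^+ 2.
Proof.
rewrite /dsB !ds2_nB; move: (nB_polar (alp p) (bet p) (aa p) x y).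
move: (nB _ _ _ (tadd x y) _) (nB _ _ _ x x) (nB _ _ _ y y) (nB _ _ _ x y) ((Dn p) ^+ 2) => A B C X d H.
rewrite -!mulrBl H; move: (d^-1) => e; by field.
Qed.

End Alg.

Section Alg2.
Context {R : realType}.
Local Notation oct := (oct R).
Ltac unf := cbv beta iota delta [onorm2 oinner ore omul oconj oadd oscale qadd qmul qopp qconj qscale qr qi qj qk ofst osnd oone ozero].
Ltac dst x := case: x => [[? ? ? ?] [? ? ? ?]].
Ltac oeq := unf; congr (Oct (Quat _ _ _ _) (Quat _ _ _ _)); ring.
Lemma n2_sq (a b c d e f g h : R) : onorm2 (Oct (Quat a b c d) (Quat e f g h)) =
  a^+2 + b^+2 + c^+2 + d^+2 + e^+2 + f^+2 + g^+2 + h^+2.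
Proof. unf; ring. Qed.
Lemma n2_ge0 (w : oct) : 0 <= onorm2 w.
Proof.
case: w => [[a b c d] [e f g h]]; rewrite n2_sq; do ! apply: addr_ge0; exact: sqr_ge0.
Qed.
Lemma n2_eq0 (w : oct) : onorm2 w = 0 -> w = ozero R.
Proof.
case: w => [[a b c d] [e f g h]]; rewrite n2_sq => H.
have ha := sqr_ge0 a; have hb := sqr_ge0 b; have hc := sqr_ge0 c; have hd := sqr_ge0 d.
have he := sqr_ge0 e; have hf := sqr_ge0 f; have hg := sqr_ge0 g; have hh := sqr_ge0 h.
have Z : forall x : R, x ^+ 2 = 0 -> x = 0 by move=> x /eqP; rewrite sqrf_eq0 => /eqP.
have -> : a = 0 by apply: Z; lra.
have -> : b = 0 by apply: Z; lra.
have -> : c = 0 by apply: Z; lra.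
have -> : d = 0 by apply: Z; lra.
have -> : e = 0 by apply: Z; lra.
have -> : f = 0 by apply: Z; lra.
have -> : g = 0 by apply: Z; lra.
have -> : h = 0 by apply: Z; lra.
reflexivity.
Qed.
Lemma Z0 be (a : oct) : oadd (oscale be (ozero R)) (omul a (ozero R)) = ozero R.
Proof. dst a; oeq. Qed.
Lemma scale0o c : oscale c (ozero R) = ozero R.
Proof. rewrite /oscale /ozero /qscale /=; by rewrite !mulr0. Qed.
Lemma scaleo_eq0 c (x : oct) : c != 0 -> oscale c x = ozero R -> x = ozero R.
Proof. by move=> c0 H; rewrite -(scaleKo c x c0) H scale0o. Qed.

Lemma ND1 al be a (x : oct * oct) :
  nB al be a x (oadd (oscale al x.1) (omul a x.2), oadd (omul (oconj a) x.1) (oscale (- be) x.2))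
  = onorm2 (oadd (oscale al x.1) (omul a x.2)) + onorm2 (oadd (omul (oconj a) x.1) (oscale (- be) x.2)).
Proof. case: x => x1 x2; rewrite /nB /=; dst x1; dst x2; dst a; unf; ring. Qed.
Lemma ND2 al be a (x1 x2 : oct) :
  oscale (al * be + onorm2 a) x1 =
  oadd (oscale be (oadd (oscale al x1) (omul a x2))) (omul a (oadd (omul (oconj a) x1) (oscale (- be) x2))).
Proof. dst x1; dst x2; dst a; oeq. Qed.
Lemma ND3 be a (x2 : oct) : oadd (omul (oconj a) (ozero R)) (oscale (- be) x2) = oscale (- be) x2.
Proof. dst x2; dst a; oeq. Qed.

Lemma Dn_eq (p : oct * oct) : alp p * bet p + onorm2 (aa p) = Dn p.
Proof. rewrite /alp /bet /aa /Dn n2_mul n2_conj; ring. Qed.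

Lemma nondeg (p x : oct * oct) : chart_dom p -> (forall y, dsB p x y = 0) -> x = tzero R.
Proof.
rewrite /chart_dom => Hp Hx.
have D0 : Dn p != 0 by rewrite /Dn; apply/eqP => E; rewrite E in Hp; rewrite ltxx in Hp.
have b0 : bet p != 0.
  by rewrite /bet; apply/eqP => E; have := n2_ge0 p.1; lra.
set w1 := oadd (oscale (alp p) x.1) (omul (aa p) x.2).
set w2 := oadd (omul (oconj (aa p)) x.1) (oscale (- bet p) x.2).
have := Hx (w1, w2); rewrite dsB_nB ND1 => /eqP.
rewrite mulf_eq0 invr_eq0 expf_eq0 (negbTE D0) andbF orbF => /eqP H.
have h1 := n2_ge0 w1; have h2 := n2_ge0 w2.
have W1 : w1 = ozero R by apply: n2_eq0; lra.
have W2 : w2 = ozero R by apply: n2_eq0; lra.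
have X1 : x.1 = ozero R.
  apply: (@scaleo_eq0 (Dn p)) => //.
  by rewrite -Dn_eq (ND2 _ _ _ _ x.2) -/w1 -/w2 W1 W2 Z0.
have X2 : x.2 = ozero R.
  apply: (@scaleo_eq0 (- bet p)); first by rewrite oppr_eq0.
  by move: W2; rewrite /w2 X1 ND3.
by case: x X1 X2 {Hx w1 w2 W1 W2 h1 h2 H} => x1 x2 /= -> ->.
Qed.
End Alg2.

Section Bil.
Context {R : realType}.

Lemma bil_gram n (b : 'rV[R]_n -> 'rV[R]_n -> R)
  (Hl : forall c u v w, b (c *: u + v) w = c * b u w + b v w)
  (Hs : forall u v, b u v = b v u) (Q : 'M[R]_n) i j :
  (Q *m (\matrix_(k, l) b (row k 1%:M) (row l 1%:M)) *m Q^T) i j = b (row i Q) (row j Q).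
Proof.
have H0 : forall w, b 0 w = 0.
  move=> w; have := Hl 1 0 0 w; rewrite scaler0 addr0 mul1r => E.
  by apply: (addrI (b 0 w)); rewrite addr0 -E.
have HZ : forall c u w, b (c *: u) w = c * b u w.
  by move=> c u w; rewrite -[c *: u]addr0 Hl H0 addr0.
have HD : forall u v w, b (u + v) w = b u w + b v w.
  by move=> u v w; rewrite -[u in LHS]scale1r Hl mul1r.
have HS : forall I (r : seq I) (F : I -> 'rV[R]_n) w, b (\sum_(k <- r) F k) w = \sum_(k <- r) b (F k) w.
  move=> I r F w; elim: r => [|x r IH]; first by rewrite !big_nil H0.
  by rewrite !big_cons HD IH.
have -> : b (row i Q) (row j Q) = \sum_k \sum_l (Q i k * Q j l) * b (delta_mx 0 k) (delta_mx 0 l).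
  rewrite [row i Q]row_sum_delta HS; apply: eq_bigr => k _.
  rewrite HZ Hs [row j Q]row_sum_delta HS big_distrr; apply: eq_bigr => l _.
  by rewrite HZ Hs !mxE /=; ring.
rewrite mxE.
under eq_bigr => l _ do rewrite !mxE big_distrl.
rewrite exchange_big; apply: eq_bigr => k _; apply: eq_bigr => l _.
by rewrite !mxE !row1 /=; ring.
Qed.
End Bil.

Section Sig.
Context {R : realType}.
Local Notation oct := (oct R).
Ltac dst x := case: x => [[? ? ? ?] [? ? ? ?]].

Definition e8 (k : nat) : oct := oct_of_fun (fun m => if Nat.eqb m k then 1 else 0).
Ltac unf := cbv beta iota delta [onorm2 oinner ore omul oconj oadd oscale qadd qmul qopp qconj qscale qr qi qj qk ofst osnd oone ozero oct_of_fun e8 Nat.eqb].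

Lemma e8_inner i j : (i < 8)%N -> (j < 8)%N -> oinner (e8 i) (e8 j) = if Nat.eqb i j then 1 else 0.
Proof.
move=> Hi Hj.
case: i Hi => [|[|[|[|[|[|[|[|i]]]]]]]] // _; case: j Hj => [|[|[|[|[|[|[|[|j]]]]]]]] // _; unf; ring.
Qed.

Lemma eqb_eqn (m n : nat) : Nat.eqb m n = (m == n).
Proof. by elim: m n => [|m IH] [|n] //=; exact: IH. Qed.

Lemma tan_lin c (w w' : 'rV[R]_16) :
  tan_of_row (c *: w + w') = tadd (tscale c (tan_of_row w)) (tan_of_row w').
Proof.
rewrite /tan_of_row /tadd /tscale /oct_of_fun /oadd /oscale /qadd /qscale /=.
by rewrite !mxE.
Qed.

Definition coord (x : oct * oct) (k : 'I_16) : R :=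
  if (k < 8)%N then ocoord x.1 (inord k) else ocoord x.2 (inord (k - 8)).

Lemma tan_coord (x : oct * oct) : tan_of_row (\row_k coord x k) = x.
Proof.
case: x => [[[a b c d] [e f g h]] [[a' b' c' d'] [e' f' g' h']]].
rewrite /tan_of_row /oct_of_fun !mxE /coord !inordK //=.
by rewrite /ocoord !inordK.
Qed.

Lemma S1 al be a s c (x y : oct) :
  nB al be a (oscale s x, oscale (s * c) (omul (oconj a) x)) (oscale s y, oscale (s * c) (omul (oconj a) y))
  = s ^+ 2 * (al - be * c ^+ 2 * onorm2 a + 2 * c * onorm2 a) * oinner x y.
Proof. rewrite /nB /=; dst x; dst y; dst a; unf; ring. Qed.
Lemma S2 al be a s c t (x y : oct) :
  nB al be a (oscale s x, oscale (s * c) (omul (oconj a) x)) (ozero R, oscale t y)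
  = s * t * (1 - be * c) * ore (omul a (omul y (oconj x))).
Proof. rewrite /nB /=; dst x; dst y; dst a; unf; ring. Qed.
Lemma S3 al be a t (x y : oct) :
  nB al be a (ozero R, oscale t x) (ozero R, oscale t y) = - be * t ^+ 2 * oinner x y.
Proof. rewrite /nB /=; dst x; dst y; dst a; unf; ring. Qed.

Definition phi (p : oct * oct) (i : 'I_16) : oct * oct :=
  if (i < 8)%N then
    (oscale (Num.sqrt (bet p * Dn p)) (e8 i),
     oscale (Num.sqrt (bet p * Dn p) * (bet p)^-1) (omul (oconj (aa p)) (e8 i)))
  else (ozero R, oscale (Dn p / Num.sqrt (bet p)) (e8 (i - 8))).

Definition Qm (p : oct * oct) : 'M[R]_16 := \matrix_i (\row_k coord (phi p i) k).

Lemma bet_gt0 (p : oct * oct) : 0 < bet p.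
Proof. rewrite /bet; have := n2_ge0 p.1; lra. Qed.

Lemma ord_eqb n (i j : 'I_n) : (i == j) = Nat.eqb i j.
Proof. by rewrite eqb_eqn. Qed.

Lemma sig_entry (p : oct * oct) (i j : 'I_16) : chart_dom p ->
  dsB p (phi p i) (phi p j) = (block_mx 1%:M 0 0 (- 1%:M) : 'M[R]_(8 + 8)) i j.
Proof.
rewrite /chart_dom => Hp.
have D0 : 0 < Dn p by [].
have B0 := bet_gt0 p.
have Ea : onorm2 (aa p) = Dn p - alp p * bet p by rewrite -Dn_eq; ring.
have Hs1 : Num.sqrt (bet p * Dn p) ^+ 2 = bet p * Dn p by rewrite sqr_sqrtr // mulr_ge0 // ltW.
have Hs2 : (Dn p / Num.sqrt (bet p)) ^+ 2 = Dn p ^+ 2 / bet p by rewrite expr_div_n sqr_sqrtr // ltW.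
have Bn : bet p != 0 by rewrite gt_eqF.
have Dn0 : Dn p != 0 by rewrite gt_eqF.
have Hi16 := ltn_ord i; have Hj16 := ltn_ord j.
rewrite dsB_nB /phi.
case: (ltnP i 8) => Hi; case: (ltnP j 8) => Hj.
- rewrite [in RHS](_ : i = lshift 8 (Ordinal Hi)); last by apply/val_inj.
  rewrite [in RHS](_ : j = lshift 8 (Ordinal Hj)); last by apply/val_inj.
  rewrite block_mxEul mxE ord_eqb /= S1 e8_inner // Ea Hs1.
  by case: (Nat.eqb i j) => /=; field; rewrite Dn0 Bn.
- rewrite [in RHS](_ : i = lshift 8 (Ordinal Hi)); last by apply/val_inj.
  have Hj' : (j - 8 < 8)%N by lia.
  rewrite [in RHS](_ : j = rshift 8 (Ordinal Hj')); last by apply/val_inj => /=; lia.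
  by rewrite block_mxEur mxE S2 mulfV // subrr mulr0 !mul0r.
- have Hi' : (i - 8 < 8)%N by lia.
  rewrite [in RHS](_ : i = rshift 8 (Ordinal Hi')); last by apply/val_inj => /=; lia.
  rewrite [in RHS](_ : j = lshift 8 (Ordinal Hj)); last by apply/val_inj.
  by rewrite block_mxEdl mxE nB_sym S2 mulfV // subrr mulr0 !mul0r.
- have Hi' : (i - 8 < 8)%N by lia.
  rewrite [in RHS](_ : i = rshift 8 (Ordinal Hi')); last by apply/val_inj => /=; lia.
  have Hj' : (j - 8 < 8)%N by lia.
  rewrite [in RHS](_ : j = rshift 8 (Ordinal Hj')); last by apply/val_inj => /=; lia.
  rewrite block_mxEdr !mxE ord_eqb /= S3 e8_inner // Hs2.
  by case: (Nat.eqb (i - 8) (j - 8)) => /=; field; rewrite ?Dn0 ?Bn.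
Qed.

Lemma signature (p : oct * oct) : chart_dom p -> has_signature 8 8 (gram p).
Proof.
move=> Hp.
pose b := fun w w' : 'rV[R]_16 => dsB p (tan_of_row w) (tan_of_row w').
have Hl : forall c u v w, b (c *: u + v) w = c * b u w + b v w.
  by move=> c u v w; rewrite /b tan_lin !dsB_nB nB_lin mulrDl mulrA.
have Hs : forall u v, b u v = b v u by move=> u v; rewrite /b !dsB_nB nB_sym.
have E : (Qm p)^T^T *m gram p *m (Qm p)^T = (block_mx 1%:M 0 0 (- 1%:M) : 'M[R]_(8 + 8)).
  rewrite trmxK; apply/matrixP => i j.
  rewrite (_ : gram p = \matrix_(k, l) b (row k 1%:M) (row l 1%:M)) //.
  by rewrite bil_gram // /b !rowK !tan_coord sig_entry.
exists (Qm p)^T; split; last exact: E.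
rewrite unitmxE unitfE; apply/eqP => H0.
have Dj : \det (block_mx 1%:M 0 0 (- 1%:M) : 'M[R]_(8 + 8)) = 1.
  by rewrite det_ublock det1 -scaleN1r detZ det1 mul1r mulr1 -signr_odd.
move: (congr1 determinant E); rewrite !det_mulmx H0 mulr0 => H.
have : (0:R) = 1 by rewrite H; exact: Dj.
by move/eqP; rewrite eq_sym oner_eq0.
Qed.
End Sig.

Section Der.
Context {R : realType}.
Local Notation oct := (oct R).
Ltac unf := rewrite /onorm2 /oinner /ore /omul /oconj /oadd /oscale /qadd /qmul /qopp /qconj /qscale; cbn [qr qi qj qk ofst osnd].

Definition isd (f : R -> R) (a : R) := is_derive (0:R) (1:R) f a.

Lemma D_add f g a b : isd f a -> isd g b -> isd (fun t => f t + g t) (a + b).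
Proof. move=> Ha Hb; exact: is_deriveD. Qed.
Lemma D_opp f a : isd f a -> isd (fun t => - f t) (- a).
Proof. move=> Ha; exact: is_deriveN. Qed.
Lemma D_mul f g a b : isd f a -> isd g b -> isd (fun t => f t * g t) (f 0 * b + g 0 * a).
Proof. move=> Ha Hb; exact: is_deriveM. Qed.
Lemma D_cst (c : R) : isd (fun _ => c) 0.
Proof. exact: is_derive_cst. Qed.
Lemma D_inv f a : f 0 != 0 -> isd f a -> isd (fun t => (f t)^-1) (- a / (f 0) ^+ 2).
Proof.
move=> f0 [df dv]; apply: DeriveDef; first exact: derivableV.
rewrite deriveV // dv; rewrite [LHS]/GRing.scale /=. by rewrite mulrC mulrN mulNr.
Qed.
Lemma D_eq f a b : isd f a -> a = b -> isd f b.
Proof. by move=> ? <-. Qed.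
Lemma D_uniq f a b : isd f a -> isd f b -> a = b.
Proof. by move=> [_ <-] [_ <-]. Qed.
Lemma D_near f g a : (\forall t \near (0:R), f t = g t) -> isd f a -> isd g a.
Proof. move=> H; exact: near_eq_is_derive. Qed.


Definition oder (f : R -> oct) (d : oct) :=
  forall k : 'I_8, isd (fun t => ocoord (f t) k) (ocoord d k).

Lemma oderE f d : oder f d <->
  isd (fun t => qr (ofst (f t))) (qr (ofst d)) /\
  isd (fun t => qi (ofst (f t))) (qi (ofst d)) /\
  isd (fun t => qj (ofst (f t))) (qj (ofst d)) /\
  isd (fun t => qk (ofst (f t))) (qk (ofst d)) /\
  isd (fun t => qr (osnd (f t))) (qr (osnd d)) /\
  isd (fun t => qi (osnd (f t))) (qi (osnd d)) /\
  isd (fun t => qj (osnd (f t))) (qj (osnd d)) /\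
  isd (fun t => qk (osnd (f t))) (qk (osnd d)).
Proof.
split.
  move=> H.
  split; first exact: (H (@Ordinal 8 0 isT)).
  split; first exact: (H (@Ordinal 8 1 isT)).
  split; first exact: (H (@Ordinal 8 2 isT)).
  split; first exact: (H (@Ordinal 8 3 isT)).
  split; first exact: (H (@Ordinal 8 4 isT)).
  split; first exact: (H (@Ordinal 8 5 isT)).
  split; first exact: (H (@Ordinal 8 6 isT)).
  exact: (H (@Ordinal 8 7 isT)).
move=> [H0 [H1 [H2 [H3 [H4 [H5 [H6 H7]]]]]]].
by case=> [[|[|[|[|[|[|[|[|k]]]]]]]] Hk].
Qed.

Ltac dstep := first [ eassumption | apply: D_add | apply: D_opp | apply: D_mul | apply: D_cst ].
Ltac dsolve := eapply D_eq; [ repeat dstep | cbv beta; ring ].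

Lemma oder_mul f g df dg : oder f df -> oder g dg ->
  oder (fun t => omul (f t) (g t)) (oadd (omul df (g 0)) (omul (f 0) dg)).
Proof.
move=> /oderE [F0 [F1 [F2 [F3 [F4 [F5 [F6 F7]]]]]]].
move=> /oderE [G0 [G1 [G2 [G3 [G4 [G5 [G6 G7]]]]]]].
apply/oderE; unf.
do 7 (split; first by dsolve).
dsolve.
Qed.

Ltac dst x := case: x => [[? ? ? ?] [? ? ? ?]].
Ltac unfc := cbv beta iota delta [onorm2 oinner ore omul oconj oadd oscale qadd qmul qopp qconj qscale qr qi qj qk ofst osnd oone ozero].

Lemma oder_conj f df : oder f df -> oder (fun t => oconj (f t)) (oconj df).
Proof.
move=> /oderE [F0 [F1 [F2 [F3 [F4 [F5 [F6 F7]]]]]]].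
apply/oderE; unf.
do 7 (split; first by dsolve).
dsolve.
Qed.

Lemma oder_scale s ds f df : isd s ds -> oder f df ->
  oder (fun t => oscale (s t) (f t)) (oadd (oscale ds (f 0)) (oscale (s 0) df)).
Proof.
move=> S /oderE [F0 [F1 [F2 [F3 [F4 [F5 [F6 F7]]]]]]].
apply/oderE; unf.
do 7 (split; first by dsolve).
dsolve.
Qed.

Lemma n2_der_val (x dx : oct) :
  qr (ofst (oadd (omul dx (oconj x)) (omul x (oconj dx)))) = 2 * oinner x dx.
Proof. dst x; dst dx; unfc; ring. Qed.


Lemma der_n2 f df : oder f df -> isd (fun t => onorm2 (f t)) (2 * oinner (f 0) df).
Proof.
move=> F; have := @oder_mul f (fun t => oconj (f t)) df (oconj df) F (@oder_conj f df F) => /oderE [H _].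
by apply: D_eq H _; rewrite n2_der_val.
Qed.

Lemma oder_near f g d : (\forall t \near (0:R), f t = g t) -> oder f d -> oder g d.
Proof.
move=> H F k; apply: (@D_near (fun t => ocoord (f t) k) (fun t => ocoord (g t) k) (ocoord d k) _ (F k)).
by apply: filterS H => t ->.
Qed.

Lemma oder_uniq f a b : oder f a -> oder f b -> a = b.
Proof.
move=> Fa Fb.
have E : forall k, ocoord a k = ocoord b k by move=> k; exact: D_uniq (Fa k) (Fb k).
case: a E {Fa Fb} => [[a0 a1 a2 a3] [a4 a5 a6 a7]];
case: b => [[b0 b1 b2 b3] [b4 b5 b6 b7]] E.
have e0 : a0 = b0 := E (@Ordinal 8 0 isT).
have e1 : a1 = b1 := E (@Ordinal 8 1 isT).
have e2 : a2 = b2 := E (@Ordinal 8 2 isT).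
have e3 : a3 = b3 := E (@Ordinal 8 3 isT).
have e4 : a4 = b4 := E (@Ordinal 8 4 isT).
have e5 : a5 = b5 := E (@Ordinal 8 5 isT).
have e6 : a6 = b6 := E (@Ordinal 8 6 isT).
have e7 : a7 = b7 := E (@Ordinal 8 7 isT).
by rewrite e0 e1 e2 e3 e4 e5 e6 e7.
Qed.
End Der.

Arguments der_n2 {R f df}. Arguments D_inv {R f a}. Arguments oder_scale {R s ds f df}.
Arguments oder_conj {R f df}. Arguments oder_mul {R f g df dg}. Arguments oder_near {R f g d}.
Arguments oder_uniq {R f a b}.
Section Chart.
Context {R : realType}.
Local Notation oct := (oct R).
Ltac unf := cbv beta iota delta [onorm2 oinner ore omul oconj oadd oscale qadd qmul qopp qconj qscale qr qi qj qk ofst osnd oone ozero].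
Ltac dst x := case: x => [[? ? ? ?] [? ? ? ?]].
Ltac oeq := unf; congr (Oct (Quat _ _ _ _) (Quat _ _ _ _)); ring.

Lemma X1 (u xi : oct) l s :
  oadd (oscale (- l * s) (oconj u)) (oscale s (oconj xi)) =
  oscale s (oadd (oconj xi) (oscale (- l) (oconj u))).
Proof. dst u; dst xi; oeq. Qed.
Lemma X2 (u v xi eta : oct) l s :
  oadd (oscale (- l * s) (omul v (oconj u))) (oscale s (oadd (omul eta (oconj u)) (omul v (oconj xi)))) =
  oscale s (oadd (omul eta (oconj u)) (omul v (oadd (oconj xi) (oscale (- l) (oconj u))))).
Proof. dst u; dst v; dst xi; dst eta; oeq. Qed.

Lemma final_alg (p t : oct * oct) : onorm2 p.1 != 0 -> Dn p != 0 ->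
  ds2 (oscale (onorm2 p.1)^-1 (oconj p.1), oscale (onorm2 p.1)^-1 (omul p.2 (oconj p.1)))
      (oadd (oscale (- (2 * oinner p.1 t.1) / onorm2 p.1 ^+ 2) (oconj p.1))
            (oscale (onorm2 p.1)^-1 (oconj t.1)),
       oadd (oscale (- (2 * oinner p.1 t.1) / onorm2 p.1 ^+ 2) (omul p.2 (oconj p.1)))
            (oscale (onorm2 p.1)^-1 (oadd (omul t.2 (oconj p.1)) (omul p.2 (oconj t.1)))))
  = ds2 p t.
Proof.
case: p => u v; case: t => xi eta; rewrite /Dn; cbn [fst snd] => N0 D0.
have -> : - (2 * oinner u xi) / onorm2 u ^+ 2 = - (2 * oinner u xi * (onorm2 u)^-1) * (onorm2 u)^-1.
  by field.
rewrite X1 X2.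
rewrite /ds2; cbv beta zeta iota delta [fst snd].
rewrite !n2_scale n2_conj n2_mul cross_scale L_u ore_scale L_c L_b L_d L_a !n2_conj.
move: (onorm2 u) (onorm2 v) (onorm2 xi) (onorm2 eta) (oinner u xi) (oinner eta v) N0 D0 => N nv nx ne ux ev N0 D0.
move: (ore _) => T.
by field; rewrite D0 N0.
Qed.

Lemma trans_lem (u1 v1 u2 v2 : oct) : oequiv (oone R) u1 v1 u2 (oone R) v2 ->
  onorm2 u1 != 0 /\ u2 = oscale (onorm2 u1)^-1 (oconj u1) /\
  v2 = oscale (onorm2 u1)^-1 (omul v1 (oconj u1)).
Proof.
case=> l [l0 [E1 [E2 E3]]].
rewrite mul1o in E2; subst l.
have N0 : onorm2 u1 != 0 by apply/eqP => /n2_eq0.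
split; first exact: N0.
split.
  by rewrite -(mul1o (oconj u1)) E1 mulKo scaleKo.
by rewrite E3 mulKo scaleKo.
Qed.

Lemma chart_change (g1 g2 : R -> oct * oct) (d1 d2 : oct * oct) :
  (\forall t \near (0 : R),
     chart_dom (g1 t) /\ chart_dom (g2 t) /\
     oequiv (oone R) (g1 t).1 (g1 t).2 (g2 t).1 (oone R) (g2 t).2) ->
  curve_deriv0 g1 d1 -> curve_deriv0 g2 d2 ->
  ds2 (g1 0) d1 = ds2 (g2 0) d2.
Proof.
move=> H Hd1 Hd2.
have HU : oder (fun t => (g1 t).1) d1.1 := fun k => (Hd1 k).1.
have HV : oder (fun t => (g1 t).2) d1.2 := fun k => (Hd1 k).2.
have HU2 : oder (fun t => (g2 t).1) d2.1 := fun k => (Hd2 k).1.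
have HV2 : oder (fun t => (g2 t).2) d2.2 := fun k => (Hd2 k).2.
have H' : \forall t \near (0:R), onorm2 (g1 t).1 != 0 /\
    (g2 t).1 = oscale (onorm2 (g1 t).1)^-1 (oconj (g1 t).1) /\
    (g2 t).2 = oscale (onorm2 (g1 t).1)^-1 (omul (g1 t).2 (oconj (g1 t).1)).
  by apply: filterS H => t [_ [_ Heq]]; exact: trans_lem Heq.
have [N0 [E1 E2]] := nbhs_singleton H'.
have Dc : chart_dom (g1 0) := (nbhs_singleton H).1.
have Hn := der_n2 HU.
have Hi := D_inv N0 Hn.
have A1 := oder_scale Hi (oder_conj HU).
have A2 := oder_scale Hi (oder_mul HV (oder_conj HU)).
have N1 : \forall t \near (0:R), oscale (onorm2 (g1 t).1)^-1 (oconj (g1 t).1) = (g2 t).1.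
  by apply: filterS H' => t [_ [-> _]].
have N2 : \forall t \near (0:R), oscale (onorm2 (g1 t).1)^-1 (omul (g1 t).2 (oconj (g1 t).1)) = (g2 t).2.
  by apply: filterS H' => t [_ [_ ->]].
have B1 := oder_near N1 A1.
have B2 := oder_near N2 A2.
have Ed1 := oder_uniq B1 HU2.
have Ed2 := oder_uniq B2 HV2.
rewrite (surjective_pairing d2) -Ed1 -Ed2 (surjective_pairing (g2 0)) E1 E2.
symmetry; apply: final_alg => //.
rewrite /chart_dom in Dc; rewrite /Dn; apply/eqP => E; rewrite E ltxx in Dc; done.
Qed.
End Chart.

Theorem proposition7p2 (R : realType) :
  (* on each chart (both charts have the same coordinate domain and formula) *)
  (forall p : oct R * oct R, chart_dom p ->
     (* dsB is a symmetric bilinear form with quadratic form ds2 *)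
     (forall x y, dsB p x y = dsB p y x) /\
     (forall (c : R) x y z, dsB p (tadd (tscale c x) y) z = c * dsB p x z + dsB p y z) /\
     (forall x, dsB p x x = ds2 p x) /\
     (* non-degenerate *)
     (forall x, (forall y, dsB p x y = 0) -> x = tzero R) /\
     (* of signature (8,8) *)
     has_signature 8 8 (gram p)) /\
  (* well defined on OP^(1,1): the two charts induce the same ds^2 on
     their overlap (checked on arbitrary differentiable curves) *)
  (forall (g1 g2 : R -> oct R * oct R) (d1 d2 : oct R * oct R),
     (\forall t \near (0 : R),
        chart_dom (g1 t) /\ chart_dom (g2 t) /\
        (* [1, u1(t), v1(t)] ~ [u2(t), 1, v2(t)] *)
        oequiv (oone R) (g1 t).1 (g1 t).2 (g2 t).1 (oone R) (g2 t).2) ->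
     curve_deriv0 g1 d1 -> curve_deriv0 g2 d2 ->
     ds2 (g1 0) d1 = ds2 (g2 0) d2).
Proof.
split.
  move=> p Hp; split; [|split; [|split; [|split]]].
  - by move=> x y; rewrite !dsB_nB nB_sym.
  - by move=> c x y z; rewrite !dsB_nB nB_lin mulrDl mulrA.
  - by move=> x; rewrite dsB_nB ds2_nB.
  - by move=> x Hx; exact: nondeg Hp Hx.
  - exact: signature.
move=> g1 g2 d1 d2; exact: chart_change.
Qed.
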